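(* Let $G$ be a graph with a vertex $r$ that belongs to no minimum vertex cover of $G$ (so $\mathrm{OPT}(G-r)=\mathrm{OPT}(G)$), and let $Y$ be a minimal blocking set of $G$ with $r\notin Y$. Then there exists a (possibly empty) set $Z\subseteq N(r)$ such that $Y\cup Z$ is a minimal blocking set of $G-r$.
   Context: $\mathrm{OPT}(G)$ is the minimum vertex cover size; minimum vertex covers have size $\mathrm{OPT}(G)$. $Y\subseteq V(G)$ is a blocking set if no minimum vertex cover contains $Y$; minimal if no proper subset is. $N(r)$ is the set of neighbors of $r$. *)

(* Defs.v *)
(* A finite simple graph is a symmetric irreflexive relation
   e : rel T on a finType T. Induced subgraphs are represented by a vertex set
   V : {set T}; G itself is V = [set: T], and G - r is V = [set~ r]. *)
From mathcomp Require Import all_boot.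
Set Implicit Arguments. Unset Strict Implicit. Unset Printing Implicit Defensive.

Section Graphs.
Variable T : finType.
Variable e : rel T.

Definition is_vc (V C : {set T}) : Prop :=
  C \subset V /\
  forall u v, u \in V -> v \in V -> e u v -> (u \in C) \/ (v \in C).

Definition is_min_vc (V C : {set T}) : Prop :=
  is_vc V C /\ forall C' : {set T}, is_vc V C' -> #|C| <= #|C'|.

Definition blocking (V Y : {set T}) : Prop :=
  Y \subset V /\ forall C : {set T}, is_min_vc V C -> ~ (Y \subset C).

Definition minimal_blocking (V Y : {set T}) : Prop :=
  blocking V Y /\ forall Y' : {set T}, Y' \proper Y -> ~ blocking V Y'.

Definition nbhd (r : T) : {set T} := [set u | e r u].

End Graphs.

(* Main.v *)
Require Import Defs.
From mathcomp Require Import all_boot.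
From Stdlib Require Import Classical.

Section Aux.
Variables (T : finType) (e : rel T).
Hypotheses (e_sym : symmetric e) (e_irr : irreflexive e).
Variable r : T.
Hypothesis hr : forall C : {set T}, is_min_vc e [set: T] C -> r \notin C.

Lemma vcT_sub C : is_vc e setT C -> r \notin C -> is_vc e [set~ r] C.
Proof.
move=> [_ H] rC; split.
  apply/subsetP => x xC; rewrite in_setC1; apply/eqP => xr; subst.
  by rewrite xC in rC.
by move=> u v _ _ euv; apply: H => //; rewrite in_setT.
Qed.

Lemma vc_del D : is_vc e setT D -> is_vc e [set~ r] (D :\ r).
Proof.
move=> [_ H]; split.
  by apply/subsetP => x; rewrite in_setD1 in_setC1 => /andP[].
move=> u v; rewrite !in_setC1 => ur vr euv.
case: (H u v (in_setT _) (in_setT _) euv) => h.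
  by left; rewrite in_setD1 ur.
by right; rewrite in_setD1 vr.
Qed.

Lemma vc_add C : is_vc e [set~ r] C -> is_vc e setT (r |: C).
Proof.
move=> [_ H]; split; first exact: subsetT.
move=> u v _ _ euv.
case: (eqVneq u r) => [->|ur]; first by left; rewrite setU11.
case: (eqVneq v r) => [->|vr]; first by right; rewrite setU11.
have [h|h] := H u v ltac:(by rewrite in_setC1) ltac:(by rewrite in_setC1) euv.
  by left; rewrite in_setU1 h orbT.
by right; rewrite in_setU1 h orbT.
Qed.

Lemma nb_sub C : is_min_vc e setT C -> nbhd e r \subset C.
Proof.
move=> hC; apply/subsetP => x; rewrite inE => erx.
have [_ H] := hC.1.
case: (H r x (in_setT _) (in_setT _) erx) => // h.
by move: (hr _ hC); rewrite h.
Qed.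

Lemma minG_minGr C : is_min_vc e setT C -> is_min_vc e [set~ r] C.
Proof.
move=> hC; split; first exact: vcT_sub _ hC.1 (hr _ hC).
move=> C' hC'; rewrite leqNgt; apply/negP => lt.
have hv := vc_add _ hC'.
have hm : is_min_vc e setT (r |: C').
  split => // D hD.
  apply: leq_trans (hC.2 D hD).
  rewrite cardsU1; apply: leq_trans _ lt.
  by case: (r \notin C').
by move: (hr _ hm); rewrite setU11.
Qed.

Lemma minGr_minG C : is_min_vc e [set~ r] C -> nbhd e r \subset C ->
  is_min_vc e setT C.
Proof.
move=> [[_ H] Hm] hN; split.
  split; first exact: subsetT.
  move=> u v _ _ euv.
  case: (eqVneq u r) => [ur|ur].
    subst u; right; apply: (subsetP hN); rewrite inE //.
  case: (eqVneq v r) => [vr|vr].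
    subst v; left; apply: (subsetP hN); rewrite inE e_sym //.
  by apply: H => //; rewrite in_setC1.
move=> D hD; apply: leq_trans (Hm _ (vc_del _ hD)) _.
by apply: subset_leq_card; apply: subsetDl.
Qed.

End Aux.

Theorem mainTheorem18 (T : finType) (e : rel T)
  (e_sym : symmetric e) (e_irr : irreflexive e)
  (r : T) (Y : {set T})
  (hr : forall C : {set T}, is_min_vc e [set: T] C -> r \notin C)
  (hY : minimal_blocking e [set: T] Y)
  (hrY : r \notin Y) :
  exists Z : {set T}, Z \subset nbhd e r /\
    minimal_blocking e [set~ r] (Y :|: Z).
Proof.
have key : forall Z W : {set T}, Z \subset nbhd e r -> W \subset Y :|: Z ->
    ~ (Y \subset W) -> ~ blocking e [set~ r] W.
  move=> Z W hZ hW hYW [_ hb].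
  have pr : (Y :&: W) \proper Y.
    rewrite properEneq subsetIl andbT; apply/negP => /eqP eq.
    by apply: hYW; rewrite -eq subsetIr.
  have nb := hY.2 _ pr.
  have [C hC] : exists C, ~ ~ (is_min_vc e setT C /\ Y :&: W \subset C).
    apply: NNPP => hn; apply: nb; split; first exact: subsetT.
    move=> C hC hs; apply: (hn); exists C; by apply.
  apply: hC => -[hC hs].
  apply: (hb C ((@minG_minGr T e r hr C hC))).
  apply/subsetP => x xW.
  have := subsetP hW x xW; rewrite in_setU => /orP[xY|xZ].
    by apply: (subsetP hs); rewrite in_setI xY.
  by apply: (subsetP ((@nb_sub T e r hr C hC))); apply: (subsetP hZ).
have sub0 : forall Z : {set T}, Z \subset nbhd e r -> Y :|: Z \subset [set~ r].
  move=> Z hZ; apply/subsetP => x; rewrite in_setU in_setC1 => /orP[xY|xZ].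
    by apply/eqP => xr; subst; rewrite xY in hrY.
  move: (subsetP hZ x xZ); rewrite inE => erx; apply/eqP => xr; subst.
  by rewrite e_irr in erx.
suff ind : forall n (Z : {set T}), #|Z| <= n -> Z \subset nbhd e r ->
    blocking e [set~ r] (Y :|: Z) ->
    exists Z : {set T}, Z \subset nbhd e r /\
      minimal_blocking e [set~ r] (Y :|: Z).
  apply: (ind _ (nbhd e r) (leqnn _) (subxx _)).
  split; first exact: sub0.
  move=> C hC hs.
  have hG := @minGr_minG T e e_sym r C hC
    (subset_trans (subsetUr _ _) hs).
  apply: (hY.1.2 C hG); exact: subset_trans (subsetUl _ _) hs.
elim=> [|n IH] Z hn hZ hb.
  - exists Z; split => //; split => // W hWp hWb.
    have hW := proper_sub hWp.
    case: (classic (Y \subset W)) => hYW; last exact: key hZ hW hYW hWb.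
    move: hn; rewrite leqn0 cards_eq0 => /eqP Z0; subst Z.
    move: hWp; rewrite setU0 properEneq => /andP[/negP hne _]; apply: hne.
    by rewrite eqEsubset -{1}(setU0 Y) hW hYW.
  - case: (classic (minimal_blocking e [set~ r] (Y :|: Z))) => hm.
      by exists Z.
    have [W [hWp hWb]] : exists W : {set T}, W \proper Y :|: Z /\ blocking e [set~ r] W.
      apply: NNPP => hn'; apply: hm; split => // W hWp hWb.
      by apply: hn'; exists W.
    have hW := proper_sub hWp.
    case: (classic (Y \subset W)) => hYW; last by case: (key Z W hZ hW hYW hWb).
    have eqW : W = Y :|: (W :&: Z).
      apply/eqP; rewrite eqEsubset; apply/andP; split.
        apply/subsetP => x xW; have := subsetP hW x xW.
        by rewrite !in_setU in_setI xW => /orP[->|->]; rewrite ?orbT.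
      by rewrite subUset hYW subsetIl.
    apply: (IH (W :&: Z)).
    + have pr : (W :&: Z) \proper Z.
        rewrite properEneq subsetIr andbT; apply/negP => /eqP hWZ.
        move: hWp; rewrite properEneq => /andP[/negP hne _]; apply: hne.
        by rewrite {1}eqW hWZ.
      rewrite -ltnS; exact: leq_trans (proper_card pr) hn.
    + exact: subset_trans (subsetIr _ _) hZ.
    + by rewrite -eqW.
Qed.
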